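(* In the 2-sided error regime, there exist moldgraphs (with arbitrarily large number $m$ of edges) on which any algorithm requires $\Omega(m\log m)$ queries to discover a realized spanning tree with constant failure probability.
   Context: Problem (graph connectivity with noisy queries): a graph $G=(V,E)$ (possibly with parallel edges), the moldgraph, with $m$ edges is given. An adversary selects an arbitrary connected spanning subgraph of $G$ to be realized. The algorithm may query an oracle on any edge $e$ (``Is $e$ realized?'') and receives ``Yes''/``No''; each query costs $1$, and answers to distinct queries (including repeated queries of the same edge) are independent. Goal: output a spanning tree of $G$ all of whose edges are realized. In the 2-sided error regime, each answer is wrong with a constant probability $p<1/2$. *)

(* Defs.v *)
From HB Require Import structures.
From mathcomp Require Import all_boot all_order all_algebra.
From mathcomp Require Import reals exp.
Set Implicit Arguments. Unset Strict Implicit. Unset Printing Implicit Defensive.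
Import Order.TTheory GRing.Theory Num.Theory.
Local Open Scope ring_scope.

(* A moldgraph is a finite multigraph: vertex type V, edge type E, and
   an endpoint map ends : E -> V * V (parallel edges allowed). *)

Definition adj (V E : finType) (ends : E -> V * V) (F : {set E}) : rel V :=
  fun x y => [exists e in F,
    (((ends e).1 == x) && ((ends e).2 == y)) || (((ends e).1 == y) && ((ends e).2 == x))].

Definition connected_sp (V E : finType) (ends : E -> V * V) (F : {set E}) : bool :=
  [forall x : V, [forall y : V, connect (adj ends F) x y]].

(* (V, F) is a forest: every edge is a bridge (no cycles, incl. loops and
   pairs of parallel edges) *)
Definition acyclic_sp (V E : finType) (ends : E -> V * V) (F : {set E}) : bool :=
  [forall e in F, ~~ connect (adj ends (F :\ e)) (ends e).1 (ends e).2].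

Definition spanning_tree (V E : finType) (ends : E -> V * V) (F : {set E}) : bool :=
  connected_sp ends F && acyclic_sp ends F.

(* Deterministic adaptive query algorithm: a decision tree that queries an
   edge and branches on the (noisy) answer, finally outputting an edge set. *)
Inductive dtree (E : finType) : Type :=
| Leaf of {set E}
| Query of E & (bool -> dtree E).

Fixpoint depth (E : finType) (t : dtree E) : nat :=
  match t with
  | Leaf _ => 0
  | Query _ k => (maxn (depth (k true)) (depth (k false))).+1
  end.

(* Probability that tree t outputs a set satisfying [good], when the realized
   edge set is S and each answer is independently wrong with probability p
   (2-sided error). *)
Fixpoint succ_prob (R : realType) (p : R) (E : finType) (S : {set E})
    (good : {set E} -> bool) (t : dtree E) : R :=
  match t with
  | Leaf T => if good T then 1 else 0
  | Query e k =>
      (1 - p) * succ_prob p S good (k (e \in S))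
      + p * succ_prob p S good (k (~~ (e \in S)))
  end.

(* A randomized algorithm is a finite probability distribution over
   deterministic decision trees (list of (weight, tree)). *)
Definition is_distr (R : realType) (E : finType) (A : seq (R * dtree E)) : Prop :=
  all (fun x => 0 <= x.1) A /\ \sum_(x <- A) x.1 = 1.

Definition alg_succ (R : realType) (p : R) (V E : finType) (ends : E -> V * V)
    (S : {set E}) (A : seq (R * dtree E)) : R :=
  \sum_(x <- A) x.1 * succ_prob p S (fun T => spanning_tree ends T && (T \subset S)) x.2.

(* Main.v *)
Require Import Defs.
From HB Require Import structures.
From mathcomp Require Import all_boot all_order all_algebra.
From mathcomp Require Import reals exp.
From mathcomp Require Import sequences.
From mathcomp Require Import zify ring lra.
Import Order.TTheory GRing.Theory Num.Theory.
Local Open Scope ring_scope.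

Definition lends (k : nat) (e : 'I_k * bool) : 'I_k.+1 * 'I_k.+1 :=
  (inord e.1, inord e.1.+1).

Definition Sx {k : nat} (x : {ffun 'I_k -> bool}) : {set 'I_k * bool} :=
  [set e | e.2 == x e.1].

Lemma adj_sym (V E : finType) (ends : E -> V * V) F : symmetric (adj ends F).
Proof.
move=> a b; apply/existsP/existsP => -[e /andP[He H]]; exists e;
  by rewrite He /= orbC.
Qed.

Lemma Sx_connected k (x : {ffun 'I_k -> bool}) : connected_sp (@lends k) (Sx x).
Proof.
have H0 : forall i, (i <= k)%N -> connect (adj (@lends k) (Sx x)) ord0 (inord i).
  elim=> [|i IH] Hi.
    by apply/eq_connect0/val_inj; rewrite /= inordK.
  apply: connect_trans (IH (ltnW Hi)) _; apply: connect1.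
  apply/existsP; exists (Ordinal Hi, x (Ordinal Hi)).
  by rewrite /Sx inE eqxx /lends /= !eqxx.
apply/forallP=> a; apply/forallP=> b.
have Ha : a = inord a by apply/val_inj; rewrite /= inordK.
have Hb : b = inord b by apply/val_inj; rewrite /= inordK.
apply: (@connect_trans _ _ ord0).
  rewrite (sym_connect_sym (@adj_sym _ _ (@lends k) (Sx x))) Ha; apply: H0; by rewrite -ltnS.
rewrite Hb; apply: H0; by rewrite -ltnS.
Qed.

Lemma conn_pair {k} {T : {set 'I_k * bool}} (j : 'I_k) : connected_sp (@lends k) T ->
  exists b, (j, b) \in T.
Proof.
move=> /forallP /(_ ord0) /forallP /(_ (inord j.+1)) Hc.
case: (boolP [exists b, (j,b) \in T]) => [/existsP//|/negP Hn]; exfalso.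
have Hcl : closed (adj (@lends k) T) [pred v : 'I_k.+1 | (v <= j)%N].
  apply: intro_closed; first exact: sym_connect_sym (@adj_sym _ _ _ _).
  move=> a b /existsP[[j' b'] /andP[Hin He]] /= Ha.
  have Hj : j' != j.
    apply/eqP=> E; apply: Hn; apply/existsP; exists b'; by rewrite -E.
  have Hj1 : (j' < k)%N := ltn_ord j'.
  have Hjn : (nat_of_ord j' != nat_of_ord j) by [].
  have Hjj := ltn_ord j.
  move: He; rewrite /lends /= => /orP[] /andP[/eqP E1 /eqP E2];
    move: Ha; rewrite -E1 -E2 !inE /= !inordK //; lia.
have := closed_connect Hcl Hc.
rewrite !inE /= inordK; last by rewrite ltnS.
by rewrite leq0n ltnn.
Qed.
Lemma prod1D_ge (R : realFieldType) (I : Type) (s : seq I) (a : I -> R) :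
  (forall i, 0 <= a i) -> 1 + \sum_(i <- s) a i <= \prod_(i <- s) (1 + a i).
Proof.
move=> Ha; elim: s => [|i s IH]; first by rewrite big_nil big_nil addr0.
rewrite !big_cons.
have Hs : 0 <= \sum_(j <- s) a j by apply: sumr_ge0.
have Hai := Ha i.
apply: (le_trans _ (ler_wpM2l (addr_ge0 ler01 Hai) IH)).
nra.
Qed.

Definition lam {R : realType} (p : R) (b0 y b : bool) : R :=
  if (b0 == y) == b then 1 - p else p.

Lemma lam_ratio {R : realType} (p : R) b0 y b : 0 < p < 2^-1 ->
  p / (1 - p) * lam p b0 y b <= lam p b0 (~~ y) b.
Proof.
move=> /andP[p0 p1].
have q0 : 0 < 1 - p by lra.
have E : p / (1 - p) * (1 - p) = p by rewrite mulfVK // gt_eqF.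
have E2 : p / (1 - p) * p <= 1 - p.
  rewrite mulrAC ler_pdivrMr //; nra.
rewrite /lam; case: b0; case: y; case: b => /=; rewrite ?E //; lra.
Qed.

Definition W {R : realType} {k} (u : 'I_k -> bool -> R) (x : {ffun 'I_k -> bool}) : R :=
  \prod_j u j (x j).
Definition Zu {R : realType} {k} (u : 'I_k -> bool -> R) : R := \sum_x W u x.
Definition good {k} (x : {ffun 'I_k -> bool}) (T : {set 'I_k * bool}) : bool :=
  spanning_tree (@lends k) T && (T \subset Sx x).
Definition Hs {R : realType} {k} (p : R) (u : 'I_k -> bool -> R) (t : dtree _) : R :=
  \sum_x W u x * succ_prob p (Sx x) (good x) t.

Lemma good_uniq k (x y : {ffun 'I_k -> bool}) T : good x T -> good y T -> x = y.
Proof.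
move=> /andP[/andP[Hc _] Hx] /andP[_ Hy]; apply/ffunP => j.
have [b Hb] := conn_pair j Hc.
have := subsetP Hx _ Hb; have := subsetP Hy _ Hb.
by rewrite !inE /= => /eqP <- /eqP <-.
Qed.

Lemma W_ge0 {R : realType} k (u : 'I_k -> bool -> R) x :
  (forall j b, 0 <= u j b) -> 0 <= W u x.
Proof. by move=> H; apply: prodr_ge0 => j _. Qed.

Lemma Zu_prod {R : realType} k (u : 'I_k -> bool -> R) :
  Zu u = \prod_j (u j true + u j false).
Proof.
rewrite /Zu /W -(bigA_distr_bigA (fun j b => u j b)) /=.
by apply: eq_bigr => j _; rewrite big_bool.
Qed.

Lemma leaf_bound {R : realType} k (r : R) (u : 'I_k -> bool -> R) (n : 'I_k -> nat) x :
  0 <= r -> (forall j b, 0 <= u j b) -> (forall j b, r ^+ n j * u j b <= u j (~~ b)) ->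
  1 <= \sum_j r ^+ n j -> 2 * W u x <= Zu u.
Proof.
move=> r0 Hu Hr Hs.
have HW : 0 <= W u x := W_ge0 _ _ x Hu.
have Hp : 0 <= \sum_j r ^+ n j by apply: sumr_ge0 => j _; exact: exprn_ge0.
apply: (le_trans (y := W u x * \prod_j (1 + r ^+ n j))).
  apply: (le_trans (y := W u x * (1 + \sum_j r ^+ n j))); first nra.
  by apply: ler_wpM2l => //; apply: prod1D_ge => j; exact: exprn_ge0.
rewrite Zu_prod /W -big_split /=.
apply: ler_prod => j _; apply/andP; split.
  by apply: mulr_ge0 => //; apply: addr_ge0; rewrite ?ler01 ?exprn_ge0.
have := Hr j (x j); have := Hu j (x j).
by case: (x j) => /= H1 H2; nra.
Qed.

Lemma main_bound {R : realType} k (p : R) (B : nat) :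
  0 < p < 2^-1 ->
  (forall n : 'I_k -> nat, (\sum_j n j <= B)%N -> 1 <= \sum_j (p / (1 - p)) ^+ n j) ->
  forall (t : dtree _) (u : 'I_k -> bool -> R) (n : 'I_k -> nat),
  (forall j b, 0 <= u j b) -> (forall j b, (p / (1 - p)) ^+ n j * u j b <= u j (~~ b)) ->
  (\sum_j n j + depth t <= B)%N -> 2 * Hs p u t <= Zu u.
Proof.
move=> Hp G; have /andP[p0 p1] := Hp.
have q0 : 0 < 1 - p by lra.
have r0 : 0 <= p / (1 - p) by apply: divr_ge0; lra.
elim=> [T|[j0 b0] kk IH] u n Hu Hr Hd.
- case: (pickP (fun x => good x T)) => [x0 Hx0|Hno].
  + have -> : Hs p u (Leaf T) = W u x0.
      rewrite /Hs (bigD1 x0) //= Hx0 mulr1 big1 ?addr0 // => y Hy.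
      case Hg: (good y T); last by rewrite mulr0.
      by move: Hy; rewrite (good_uniq _ _ _ _ Hg Hx0) eqxx.
    apply: (leaf_bound _ _ _ _ x0 r0 Hu Hr); apply: G; move: Hd => /=; lia.
  + have -> : Hs p u (Leaf T) = 0.
      by rewrite /Hs big1 // => y _ /=; rewrite Hno mulr0.
    rewrite mulr0 /Zu; apply: sumr_ge0 => x _; exact: W_ge0.
- pose u' (b : bool) := fun j y => u j y * (if j == j0 then lam p b0 y b else 1).
  have HW : forall b x, W (u' b) x = W u x * lam p b0 (x j0) b.
    move=> b x; rewrite /W /u' big_split /=; congr (_ * _).
    rewrite (bigD1 j0) //= eqxx big1 ?mulr1 // => j /negbTE -> //.
  have HH : Hs p u (Query (j0, b0) kk) = Hs p (u' true) (kk true) + Hs p (u' false) (kk false).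
    rewrite /Hs -big_split /=; apply: eq_bigr => x _; rewrite !HW inE /=.
    rewrite /lam; case: (b0 == x j0) => /=; ring.
  have HZ : Zu u = Zu (u' true) + Zu (u' false).
    rewrite /Zu -big_split /=; apply: eq_bigr => x _; rewrite !HW /lam.
    case: (b0 == x j0) => /=; ring.
  pose n' := fun j => (n j + (j == j0))%N.
  have Hn' : (\sum_(j < k) n' j = \sum_(j < k) n j + 1)%N.
    rewrite /n' big_split /=; congr (_ + _)%N.
    by rewrite (bigD1 j0) //= eqxx big1 ?addn0 // => j /negbTE ->.
  have Hu' : forall b j y, 0 <= u' b j y.
    move=> b j y; rewrite /u'; apply: mulr_ge0 => //.
    case: (j == j0); rewrite /lam; last by [].
    case: ((b0 == y) == b); lra.
  have Hr' : forall b j y, (p / (1 - p)) ^+ n' j * u' b j y <= u' b j (~~ y).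
    move=> b j y; rewrite /u' /n'; case: (eqVneq j j0) => [->|Hj].
      have -> : (n j0 + true = (n j0).+1)%N by rewrite addn1.
      rewrite exprSr.
      have L := @lam_ratio R p b0 y b Hp.
      have L0 : 0 <= lam p b0 y b by rewrite /lam; case: ((b0 == y) == b); lra.
      have := Hr j0 y; have := Hu j0 y; have := exprn_ge0 (n j0) r0.
      move=> H1 H2 H3.
      have E : (p / (1 - p)) ^+ n j0 * (p / (1 - p)) * (u j0 y * lam p b0 y b)
             = ((p / (1 - p)) ^+ n j0 * u j0 y) * ((p / (1 - p)) * lam p b0 y b) by ring.
      rewrite E; apply: ler_pM => //.
        by apply: mulr_ge0.
      by apply: mulr_ge0.
    have -> : (n j + false = n j)%N by rewrite addn0.
    rewrite !mulr1; exact: Hr.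
  rewrite HH HZ mulrDr; apply: lerD.
  + apply: (IH true (u' true) n' (Hu' true) (Hr' true)).
    move: Hd => /=; rewrite Hn' => Hd; apply: leq_trans Hd; rewrite -addnA leq_add2l add1n ltnS; exact: leq_maxl.
  + apply: (IH false (u' false) n' (Hu' false) (Hr' false)).
    move: Hd => /=; rewrite Hn' => Hd; apply: leq_trans Hd; rewrite -addnA leq_add2l add1n ltnS; exact: leq_maxr.
Qed.

Lemma count_bound {R : realType} k (r : R) (D : nat) (n : 'I_k -> nat) :
  (0 < k)%N -> 0 <= r <= 1 -> (\sum_(j < k) n j <= D)%N ->
  exists K : nat, (k < 2 * K)%N /\
    K%:R * r ^+ ((2 * D) %/ k) <= \sum_(j < k) r ^+ n j.
Proof.
move=> k0 /andP[r0 r1] HD.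
set t := ((2 * D) %/ k)%N.
pose A := [pred j : 'I_k | (n j <= t)%N].
exists #|A|; split.
  have Hc := cardC A; rewrite card_ord in Hc.
  have Hb : (#|[predC A]| * t.+1 <= D)%N.
    apply: leq_trans HD.
    rewrite -sum_nat_const (bigID A predT) /=.
    apply: leq_trans (leq_addl _ _).
    apply: leq_sum => j; rewrite !inE /= -ltnNge; exact.
  have Hk := ltn_ceil (2 * D) k0.
  rewrite -/t in Hk.
  move: Hc Hb Hk; set K := #|A|; set bd := #|[predC A]| => Hc Hb Hk.
  have H2 : (2 * bd * t.+1 < k * t.+1)%N.
    rewrite -mulnA [(k * _)%N]mulnC; apply: (leq_ltn_trans _ Hk); rewrite leq_mul2l Hb orbT //.
  rewrite ltn_mul2r /= in H2; lia.
rewrite (bigID A predT) /=.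
have Hs2 : 0 <= \sum_(i < k | predT i && ~~ A i) r ^+ n i.
  by apply: sumr_ge0 => j _; exact: exprn_ge0.
apply: (le_trans (y := \sum_(i < k | predT i && A i) r ^+ n i)); last by rewrite lerDl.
have -> : #|A|%:R * r ^+ t = \sum_(i < k | predT i && A i) r ^+ t.
  rewrite sumr_const mulr_natl; congr (_ *+ _).
apply: ler_sum => j /= Hj.
exact: ler_wiXn2l.
Qed.

Lemma real_bound {R : realType} (r c : R) (k D K : nat) :
  0 < r < 1 -> c * ln r = - 8^-1 -> (8 <= k)%N -> (k < 2 * K)%N ->
  D%:R < c * (2 * k)%:R * ln ((2 * k)%:R) ->
  1 <= K%:R * r ^+ ((2 * D) %/ k).
Proof.
move=> /andP[r0 r1] Hc k8 kK HD.
set t := ((2 * D) %/ k)%N.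
have k0 : (0 < k)%N by lia.
have Htk : (t * k <= 2 * D)%N := leq_divM _ _.
have Htk' : t%:R * k%:R <= 2 * D%:R :> R by rewrite -natrM -(natrM _ 2) ler_nat.
have lr : ln r < 0 by apply: ln_lt0; rewrite r0 r1.
set L := ln ((2 * k)%:R : R).
have L0 : 0 < L by apply: ln_gt0; rewrite ltr1n; lia.
have kR : 8 <= k%:R :> R by rewrite ler_nat.
have c0 : 0 < c.
  rewrite ltNge; apply/negP => H.
  have := mulr_le0 H (ltW lr); rewrite Hc; lra.
have H2k : (2 * k)%:R = 2 * k%:R :> R by rewrite natrM.
rewrite {1}H2k -/L in HD.
have Ht : t%:R < 4 * c * L.
  have E : c * (2 * k%:R) * L * 2 = (4 * c * L) * k%:R by ring.
  have : t%:R * k%:R < (4 * c * L) * k%:R by rewrite -E; lra.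
  by rewrite ltr_pM2r //; lra.
have tpos : 0 <= t%:R :> R by [].
have Hlnt : ln (r ^+ t) = t%:R * ln r by rewrite lnXn // mulr_natl.
have Hlow : - (L / 2) <= t%:R * ln r.
  have : 4 * c * L * ln r <= t%:R * ln r by rewrite ler_nM2r //; lra.
  have -> : 4 * c * L * ln r = - (L / 2) by rewrite (_ : 4 * c * L * ln r = 4 * L * (c * ln r)); [rewrite Hc; field | ring].
  by [].
have rt0 : 0 < r ^+ t by apply: exprn_gt0.
have Hrt : expR (- (L / 2)) <= r ^+ t.
  rewrite -[X in _ <= X](lnK rt0) Hlnt.
  by rewrite ler_expR.
set y := expR (L / 2).
have y0 : 0 < y by apply: expR_gt0.
have yy : y * y = 2 * k%:R.
  rewrite /y -expRD (_ : L / 2 + L / 2 = L); last by field.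
  rewrite /L lnK // posrE; lra.
have Hy : y <= k%:R / 2.
  have Hk2 : 2 * k%:R <= k%:R / 2 * (k%:R / 2) :> R.
    have -> : k%:R / 2 * (k%:R / 2) = k%:R * k%:R / 4 :> R by field.
    rewrite ler_pdivlMr //.
    have : 8 * k%:R <= k%:R * k%:R :> R by apply: ler_wpM2r => //; lra.
    lra.
  rewrite leNgt; apply/negP => H.
  have : k%:R / 2 * (k%:R / 2) < y * y by apply: ltr_pM => //; lra.
  lra.
have KR : k%:R + 1 <= 2 * K%:R :> R.
  have : ((k + 1)%:R <= (2 * K)%:R :> R) by rewrite ler_nat; clear -kK; lia.
  by rewrite natrD natrM.
rewrite expRN -/y in Hrt.
have aux : forall a b c : R, a <= c / 2 -> c + 1 <= 2 * b -> a <= b.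
  by move=> a b c' H1 H2; lra.
have yK : y <= K%:R := aux _ _ _ Hy KR.
have K0 : 0 <= K%:R :> R by [].
apply: le_trans (ler_wpM2l K0 Hrt).
by rewrite ler_pdivlMr // mul1r.
Qed.
Lemma tree_bound {R : realType} (p : R) k (t : dtree ('I_k * bool)%type) :
  0 < p < 2^-1 -> (8 <= k)%N ->
  (depth t)%:R < (-8 * ln (p / (1 - p)))^-1 * (2 * k)%:R * ln ((2 * k)%:R) ->
  2 * \sum_(x : {ffun 'I_k -> bool}) succ_prob p (Sx x) (good x) t
     <= #|{: {ffun 'I_k -> bool}}|%:R.
Proof.
move=> Hp k8 Hd; have /andP[p0 p1] := Hp.
have q0 : 0 < 1 - p by lra.
have r0 : 0 < p / (1 - p) by apply: divr_gt0.
have r1 : p / (1 - p) < 1 by rewrite ltr_pdivrMr //; lra.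
have lr : ln (p / (1 - p)) < 0 by apply: ln_lt0; rewrite r0 r1.
have Hc : (-8 * ln (p / (1 - p)))^-1 * ln (p / (1 - p)) = - 8^-1.
  by field; rewrite ltr0_neq0.
have := @main_bound R k p (depth t) Hp _ t (fun _ _ => 1) (fun _ => 0%N).
have -> : Hs p (fun _ _ => 1) t = \sum_(x : {ffun 'I_k -> bool}) succ_prob p (Sx x) (good x) t.
  by apply: eq_bigr => x _; rewrite /W big1 // mul1r.
have -> : Zu (fun (_ : 'I_k) (_ : bool) => 1 : R) = #|{: {ffun 'I_k -> bool}}|%:R.
  rewrite /Zu /W -sumr_const; apply: eq_bigr => x _; by rewrite big1.
apply.
- move=> n Hn.
  have [K [HK HKs]] := @count_bound R k (p / (1 - p)) (depth t) n ltac:(lia)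
      ltac:(rewrite (ltW r0) (ltW r1) //) Hn.
  apply: le_trans HKs.
  exact: (@real_bound R (p / (1 - p)) ((-8 * ln (p / (1 - p)))^-1) k (depth t) K ltac:(rewrite r0 r1 //) Hc k8 HK Hd).
- by move=> j b; rewrite ler01.
- by move=> j b; rewrite expr0 mul1r.
- by rewrite big1.
Qed.

Theorem lemma3 (R : realType) (p : R) :
  0 < p < 2^-1 ->
  exists (delta c : R), 0 < delta /\ 0 < c /\
    forall N : nat, exists (V E : finType) (ends : E -> V * V),
      (N <= #|E|)%N /\ (exists S : {set E}, connected_sp ends S) /\
      forall A : seq (R * dtree E),
        is_distr A ->
        (forall S : {set E}, connected_sp ends S -> 1 - delta <= alg_succ p ends S A) ->
        exists2 i : nat, (i < size A)%N & let x := nth (0, Leaf set0) A i in 0 < x.1 /\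
          c * (#|E|%:R) * ln (#|E|%:R) <= (depth x.2)%:R.
Proof.
move=> Hp; have /andP[p0 p1] := Hp.
have q0 : 0 < 1 - p by lra.
have r0 : 0 < p / (1 - p) by apply: divr_gt0.
have r1 : p / (1 - p) < 1 by rewrite ltr_pdivrMr //; lra.
have lr : ln (p / (1 - p)) < 0 by apply: ln_lt0; rewrite r0 r1.
set c := (-8 * ln (p / (1 - p)))^-1.
exists 4^-1, c; split; first by rewrite invr_gt0.
split; first by rewrite invr_gt0; lra.
move=> N; set k := maxn N 8.
have k8 : (8 <= k)%N by rewrite leq_maxr.
exists 'I_k.+1, ('I_k * bool)%type, (@lends k).
have cardE : #|{: 'I_k * bool}| = (2 * k)%N by rewrite card_prod card_ord card_bool mulnC.
split; first by rewrite cardE; lia.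
split; first by exists (Sx [ffun=> true]); exact: Sx_connected.
move=> A [Hpos Hsum] Hsucc.
set P := fun i : 'I_(size A) => let x := nth (0, Leaf set0) A i in
  (0 < x.1) && (c * (#|{: 'I_k * bool}|%:R) * ln (#|{: 'I_k * bool}|%:R) <= (depth x.2)%:R).
case: (boolP [exists i, P i]) => [/existsP[i /andP[H1 H2]]|Hno].
  by exists i => //; split.
exfalso.
set d := (0 : R, Leaf (E:=('I_k * bool)%type) set0).
have Hall : forall i : 'I_(size A), 2 * ((nth d A i).1 * \sum_(x : {ffun 'I_k -> bool}) succ_prob p (Sx x) (good x) (nth d A i).2)
   <= (nth d A i).1 * #|{: {ffun 'I_k -> bool}}|%:R.
  move=> i.
  have a0 : 0 <= (nth d A i).1 by apply: (all_nthP d Hpos).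
  case: (eqVneq (nth d A i).1 0) => [->|an0]; first by rewrite !mul0r mulr0.
  have apos : 0 < (nth d A i).1 by rewrite lt0r an0 a0.
  rewrite mulrCA; apply: ler_wpM2l => //.
  apply: tree_bound => //.
  move/existsPn: Hno => /(_ i); rewrite /P /= apos /=.
  by rewrite -ltNge cardE.
have Hup : 2 * \sum_(x : {ffun 'I_k -> bool}) alg_succ p (@lends k) (Sx x) A
    <= #|{: {ffun 'I_k -> bool}}|%:R.
  rewrite /alg_succ exchange_big /= mulr_sumr.
  rewrite (big_nth d) big_mkord.
  apply: (le_trans (y := \sum_(i < size A) (nth d A i).1 * #|{: {ffun 'I_k -> bool}}|%:R)).
    apply: ler_sum => i _. rewrite mulr_sumr -!mulr_sumr. exact: Hall.
  have Hs1 : \sum_(i < size A) (nth d A i).1 = 1 by rewrite -Hsum (big_nth d) big_mkord.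
  by rewrite -mulr_suml Hs1 mul1r.
have Hlow : \sum_(x : {ffun 'I_k -> bool}) (1 - 4^-1)
    <= \sum_(x : {ffun 'I_k -> bool}) alg_succ p (@lends k) (Sx x) A.
  by apply: ler_sum => x _; apply: Hsucc; exact: Sx_connected.
rewrite sumr_const in Hlow.
have Xpos : (0 < #|{: {ffun 'I_k -> bool}}|)%N.
  by apply/card_gt0P; exists [ffun=> true].
have XR : 0 < #|{: {ffun 'I_k -> bool}}|%:R :> R by rewrite ltr0n.
move: Hlow Hup XR; rewrite -mulr_natr.
set X := (#|{: {ffun 'I_k -> bool}}|%:R : R).
set Y := \sum_(x : {ffun 'I_k -> bool}) alg_succ p (@lends k) (Sx x) A.
move=> H1 H2 H3; lra.
Qed.
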